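(* Let $U\colon\mathcal{E}\to\mathbf{Set}$ be a topological category and $\overline T\colon\mathcal{E}\to\mathcal{E}$ a lifting of a monad $T\colon\mathbf{Set}\to\mathbf{Set}$. Let $(A,a)$ and $(B,b)$ be $\overline T$-algebras and $h\colon A\to B$ a $\overline T$-algebra homomorphism. Then $h^\bullet B$ is a refinement of $(A,a)$.
   Context: Topological category: $U$ such that every family of maps $(f_i\colon Y\to UA_i)$ has a unique $U$-initial lift. Fibre $\mathcal{E}_Y$: objects over $Y$, ordered by $P\sqsubseteq P'$ iff there is a morphism $P\to P'$ over $\mathit{id}_Y$. For an $\mathcal{E}$-morphism $h\colon A\to B$, $h^\bullet B\in\mathcal{E}_{UA}$ is the domain of the $U$-initial lift of the single map $Uh\colon UA\to UB$. $\overline T$ lifts $T$: a monad on $\mathcal{E}$ with $U\overline T=TU$ whose unit and multiplication lie over those of $T$. A conformance $P\in\mathcal{E}_{UA}$ is a refinement of $(A,a)$ if $A\sqsubseteq P$ and $P$ carries a $\overline T$-algebra structure making the identity-carried morphism $A\to P$ an algebra homomorphism. *)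

(* Defs.v *)
Set Implicit Arguments.
Unset Strict Implicit.

Definition cast {X Y : Type} (e : X = Y) (x : X) : Y :=
  match e in _ = Z return Z with eq_refl => x end.

Record Category := {
  Ob :> Type;
  Hom : Ob -> Ob -> Type;
  idm : forall A, Hom A A;
  comp : forall A B C, Hom B C -> Hom A B -> Hom A C;
  comp_idl : forall A B (f : Hom A B), comp (idm B) f = f;
  comp_idr : forall A B (f : Hom A B), comp f (idm A) = f;
  comp_assoc : forall A B C D (f : Hom A B) (g : Hom B C) (h : Hom C D),
      comp h (comp g f) = comp (comp h g) f
}.
Arguments Hom {c} _ _.
Arguments idm {c} _.
Arguments comp {c A B C} _ _.

Record SetFunctor (C : Category) := {
  F0 : C -> Type;
  F1 : forall A B : C, Hom A B -> F0 A -> F0 B;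
  F1_id : forall (A : C) x, F1 (idm A) x = x;
  F1_comp : forall (A B D : C) (f : Hom A B) (g : Hom B D) x,
      F1 (comp g f) x = F1 g (F1 f x)
}.
Arguments F0 {C} _ _.
Arguments F1 {C} _ {A B} _ _.

Record SetMonad := {
  T0 : Type -> Type;
  T1 : forall X Y : Type, (X -> Y) -> T0 X -> T0 Y;
  eta : forall X : Type, X -> T0 X;
  mu : forall X : Type, T0 (T0 X) -> T0 X;
  T1_id : forall X (t : T0 X), T1 (fun x => x) t = t;
  T1_comp : forall X Y Z (f : X -> Y) (g : Y -> Z) t,
      T1 (fun x => g (f x)) t = T1 g (T1 f t);
  eta_nat : forall X Y (f : X -> Y) x, T1 f (eta x) = eta (f x);
  mu_nat : forall X Y (f : X -> Y) t, T1 f (mu t) = mu (T1 (T1 f) t);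
  mu_eta_l : forall X (t : T0 X), mu (eta t) = t;
  mu_eta_r : forall X (t : T0 X), mu (T1 (@eta X) t) = t;
  mu_assoc : forall X (t : T0 (T0 (T0 X))), mu (mu t) = mu (T1 (@mu X) t)
}.
Arguments T0 _ _ : clear implicits.
Arguments T1 {s X Y} _ _.
Arguments eta {s X} _.
Arguments mu {s X} _.

Record CMonad (C : Category) := {
  M0 : C -> C;
  M1 : forall A B : C, Hom A B -> Hom (M0 A) (M0 B);
  unit : forall A : C, Hom A (M0 A);
  mult : forall A : C, Hom (M0 (M0 A)) (M0 A);
  M1_id : forall A : C, M1 (idm A) = idm (M0 A);
  M1_comp : forall (A B D : C) (f : Hom A B) (g : Hom B D),
      M1 (comp g f) = comp (M1 g) (M1 f);
  unit_nat : forall (A B : C) (f : Hom A B), comp (M1 f) (unit A) = comp (unit B) f;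
  mult_nat : forall (A B : C) (f : Hom A B),
      comp (M1 f) (mult A) = comp (mult B) (M1 (M1 f));
  mult_unit_l : forall A : C, comp (mult A) (unit (M0 A)) = idm (M0 A);
  mult_unit_r : forall A : C, comp (mult A) (M1 (unit A)) = idm (M0 A);
  mult_assoc : forall A : C, comp (mult A) (mult (M0 A)) = comp (mult A) (M1 (mult A))
}.
Arguments M0 {C} _ _.
Arguments M1 {C} _ {A B} _.
Arguments unit {C} _ _.
Arguments mult {C} _ _.

Record Lifting (C : Category) (U : SetFunctor C) (T : SetMonad) (Tb : CMonad C) := {
  lift_eq : forall X : C, F0 U (M0 Tb X) = T0 T (F0 U X);
  lift_map : forall (X Y : C) (f : Hom X Y) x,
      cast (lift_eq Y) (F1 U (M1 Tb f) x) = T1 (F1 U f) (cast (lift_eq X) x);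
  lift_unit : forall (X : C) x,
      cast (lift_eq X) (F1 U (unit Tb X) x) = eta x;
  lift_mult : forall (X : C) x,
      cast (lift_eq X) (F1 U (mult Tb X) x)
      = mu (T1 (cast (lift_eq X)) (cast (lift_eq (M0 Tb X)) x))
}.

Section Lifts.
Variables (C : Category) (U : SetFunctor C).

(* candidate lift of a U-structured source (f_i : Y -> U A_i)_{i in I}:
   an object X with U X = Y, together with morphisms X -> A_i *)
Definition LiftData (Y : Type) (I : Type) (A : I -> C) : Type :=
  { X : C & ((F0 U X = Y) * (forall i, Hom X (A i)))%type }.

Definition is_lift {Y I} {A : I -> C} (f : forall i, Y -> F0 U (A i))
    (L : LiftData Y A) : Prop :=
  forall i x, F1 U (snd (projT2 L) i) x = f i (cast (fst (projT2 L)) x).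

Definition is_initial {Y I} {A : I -> C} (f : forall i, Y -> F0 U (A i))
    (L : LiftData Y A) : Prop :=
  forall (Z : C) (g : F0 U Z -> Y),
    (forall i, exists k : Hom Z (A i), forall z, F1 U k z = f i (g z)) ->
    exists gb : Hom Z (projT1 L), forall z, cast (fst (projT2 L)) (F1 U gb z) = g z.

Definition is_initial_lift {Y I} {A : I -> C} (f : forall i, Y -> F0 U (A i))
    (L : LiftData Y A) : Prop := is_lift f L /\ is_initial f L.

Record Topological := {
  top_faithful : forall (A B : C) (f g : Hom A B),
      (forall x, F1 U f x = F1 U g x) -> f = g;
  top_lift : forall (Y I : Type) (A : I -> C) (f : forall i, Y -> F0 U (A i)),
      LiftData Y A;
  top_lift_ok : forall (Y I : Type) (A : I -> C) (f : forall i, Y -> F0 U (A i)), is_initial_lift f (top_lift f);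
  top_lift_unique : forall (Y I : Type) (A : I -> C) (f : forall i, Y -> F0 U (A i)) (L : LiftData Y A),
      is_initial_lift f L -> L = top_lift f
}.

Definition Fibre (Y : Type) : Type := { X : C & F0 U X = Y }.

Definition fibre_le {Y} (P P' : Fibre Y) : Prop :=
  exists m : Hom (projT1 P) (projT1 P'),
    forall x, cast (projT2 P') (F1 U m x) = cast (projT2 P) x.

Definition self_fibre (A : C) : Fibre (F0 U A) := existT _ A eq_refl.

(* h^bullet B : domain of the U-initial lift of the single map U h *)
Definition pullback (Top : Topological) {A B : C} (h : Hom A B) : Fibre (F0 U A) :=
  let L := @top_lift Top (F0 U A) Datatypes.unit (fun _ => B) (fun _ => F1 U h) in
  existT _ (projT1 L) (fst (projT2 L)).

Variable Tb : CMonad C.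

Definition is_alg (X : C) (x : Hom (M0 Tb X) X) : Prop :=
  comp x (unit Tb X) = idm X /\ comp x (M1 Tb x) = comp x (mult Tb X).

Definition is_alg_hom (X Y : C) (x : Hom (M0 Tb X) X) (y : Hom (M0 Tb Y) Y)
    (h : Hom X Y) : Prop :=
  comp h x = comp y (M1 Tb h).

Definition refinement (A : C) (a : Hom (M0 Tb A) A) (P : Fibre (F0 U A)) : Prop :=
  fibre_le (self_fibre A) P /\
  exists p : Hom (M0 Tb (projT1 P)) (projT1 P),
    is_alg p /\
    forall m : Hom A (projT1 P),
      (forall x, cast (projT2 P) (F1 U m x) = x) -> is_alg_hom a p m.

End Lifts.

(* Main.v *)
Require Import Defs.
From Stdlib Require Import FunctionalExtensionality.

Lemma cast_K {X Y : Type} (e : X = Y) x : cast (eq_sym e) (cast e x) = x.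
Proof. destruct e; reflexivity. Qed.
Lemma cast_Kinv {X Y : Type} (e : X = Y) y : cast e (cast (eq_sym e) y) = y.
Proof. destruct e; reflexivity. Qed.
Lemma cast_inj {X Y : Type} (e : X = Y) x y : cast e x = cast e y -> x = y.
Proof. destruct e; auto. Qed.

Theorem lemma3 (C : Category) (U : SetFunctor C) (Top : Topological U)
    (T : SetMonad) (Tb : CMonad C) (Lf : Lifting U T Tb)
    (A B : C) (a : Hom (M0 Tb A) A) (b : Hom (M0 Tb B) B)
    (ha : is_alg a) (hb : is_alg b)
    (h : Hom A B) (hh : is_alg_hom a b h) :
  refinement a (pullback Top h).
Proof.
  unfold refinement, pullback; cbv zeta.
  pose (f := fun _ : Datatypes.unit => F1 U h).
  change (fun _ : Datatypes.unit => F1 U h) with f.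
  destruct (top_lift_ok Top f) as [Hl Hi].
  revert Hl Hi.
  destruct (top_lift Top f) as [P [e k]].
  unfold is_lift, is_initial; cbn.
  intros Hl Hi.
  destruct Lf as [lq lmap lunit lmult].
  set (phi := fun z : F0 U (M0 Tb P) =>
          cast (eq_sym (lq A)) (T1 (cast e) (cast (lq P) z))).
  set (g := fun z => F1 U a (phi z)).
  assert (Hp : exists p : Hom (M0 Tb P) P, forall z, cast e (F1 U p z) = g z).
  { apply Hi. intros i. exists (comp b (M1 Tb (k i))). intros z.
    unfold f, g. rewrite <- F1_comp. rewrite hh. rewrite !F1_comp. f_equal.
    apply (cast_inj (lq B)). rewrite !lmap. unfold phi. rewrite cast_Kinv.
    rewrite <- T1_comp. f_equal. apply functional_extensionality. apply Hl. }
  destruct Hp as [p Hp].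
  split.
  - unfold fibre_le; cbn.
    destruct (Hi A (fun x => x)) as [m Hm].
    + intros i. exists h. reflexivity.
    + exists m. exact Hm.
  - exists p. split.
    + split; apply (top_faithful Top); intros x; apply (cast_inj e).
      * rewrite F1_comp, Hp, F1_id. unfold g, phi.
        rewrite lunit. rewrite eta_nat. rewrite <- (lunit A).
        rewrite cast_K. rewrite <- F1_comp. destruct ha as [-> _]. apply F1_id.
      * rewrite !F1_comp, !Hp. unfold g.
        assert (E1 : phi (F1 U (M1 Tb p) x)
           = cast (eq_sym (lq A)) (T1 (F1 U a) (T1 phi (cast (lq (M0 Tb P)) x)))).
        { unfold phi at 1. rewrite lmap. rewrite <- T1_comp. rewrite <- T1_comp.
          f_equal. f_equal. apply functional_extensionality. intros y.
          rewrite Hp. reflexivity. }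
        rewrite E1.
        rewrite <- (cast_Kinv (lq (M0 Tb A)) (T1 phi _)).
        rewrite <- lmap, cast_K.
        rewrite <- F1_comp. destruct ha as [_ ->]. rewrite F1_comp. f_equal.
        apply (cast_inj (lq A)). rewrite lmult, cast_Kinv. unfold phi at 2.
        rewrite lmult. rewrite cast_Kinv. rewrite mu_nat. f_equal.
        rewrite <- !T1_comp. f_equal. apply functional_extensionality. intros y.
        unfold phi. rewrite cast_Kinv. reflexivity.
    + intros m Hm. unfold is_alg_hom. apply (top_faithful Top); intros x.
      apply (cast_inj e). rewrite !F1_comp, Hm, Hp. unfold g, phi. f_equal.
      rewrite lmap. rewrite <- T1_comp.
      replace (fun x0 => cast e (F1 U m x0)) with (fun x0 : F0 U A => x0)
        by (apply functional_extensionality; intros; symmetry; apply Hm).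
      rewrite T1_id. symmetry. apply cast_K.
Qed.
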